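(* Fix a degree sequence $\mathbf d=(d_1,\dots,d_n)$ with $\ell_n=d_1+\dots+d_n$ even, and an increasing sequence $(g_l)_{l\in\mathbb{N}_0}$. For all distinct vertices $a,b\in[n]$ with $d_a\le g_0$, $d_b\le g_0$, and for all $\bar k\in\mathbb{N}$, $$\mathbb{P}\big(\mathrm{dist}_{\mathrm{CM}_n}(a,b)\le2\bar k\big)\le\frac{d_ad_b}{\ell_n}\sum_{k=1}^{2\bar k}\Big(1-\frac{2k}{\ell_n}\Big)^{-k}\prod_{l=1}^{k-1}\nu_n(g_l\wedge g_{k-l})+(d_a+d_b)\sum_{k=1}^{\bar k}\Big(1-\frac{2k}{\ell_n}\Big)^{-k}\big(1-F_n^*(g_k)\big)\prod_{l=1}^{k-1}\nu_n(g_l).$$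
   Context: $\mathrm{CM}_n$ is the configuration model: the random multigraph on $[n]$ obtained by attaching $d_i$ half-edges to vertex $i$ and pairing all half-edges uniformly at random; $\mathrm{dist}_{\mathrm{CM}_n}$ is graph distance. $a\wedge b=\min\{a,b\}$. Size-biased distribution function: $F_n^*(t)=\frac1{\ell_n}\sum_{v\in[n]}d_v\mathbf 1_{\{d_v\le t\}}$. Truncated mean: $\nu_n(t)=\frac1{\ell_n}\sum_{v\in[n]}d_v(d_v-1)\mathbf 1_{\{d_v\le t\}}$. *)

(* Defs.v *)
From mathcomp Require Import all_boot all_order all_fingroup all_algebra.
Set Implicit Arguments. Unset Strict Implicit. Unset Printing Implicit Defensive.
Import Order.TTheory GRing.Theory Num.Theory.
Local Open Scope ring_scope.

Section CM.
Variables (n : nat) (d : 'I_n -> nat).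

Definition half_edge : finType := {v : 'I_n & 'I_(d v)}.

Definition elln : nat := (\sum_(v < n) d v)%N.

(* a pairing of all half-edges = fixed-point-free involution *)
Definition is_pairing (p : {perm half_edge}) : bool :=
  [forall h, (p (p h) == h) && (p h != h)].

Definition pairings : {set {perm half_edge}} := [set p | is_pairing p].

Definition cm_adj (p : {perm half_edge}) : rel 'I_n :=
  fun u v => [exists h : half_edge, (tag h == u) && (tag (p h) == v)].

Definition cm_dist_le (p : {perm half_edge}) (a b : 'I_n) (m : nat) : bool :=
  [exists k : 'I_m.+1, [exists s : (nat_of_ord k).-tuple 'I_n,
      path (cm_adj p) a s && (last a s == b)]].

Definition cm_prob (R : numFieldType) (E : pred {perm half_edge}) : R :=
  (#|[set p in pairings | E p]|)%:R / (#|pairings|)%:R.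

Definition Fstar (R : realFieldType) (t : R) : R :=
  (\sum_(v < n | (d v)%:R <= t) (d v)%:R) / (elln)%:R.

Definition nun (R : realFieldType) (t : R) : R :=
  (\sum_(v < n | (d v)%:R <= t) ((d v) * (d v).-1)%:R) / (elln)%:R.

End CM.

(* Main.v *)
Require Import Defs.
From mathcomp Require Import all_boot all_order all_fingroup all_algebra.
From mathcomp Require Import ring lra zify.
Set Implicit Arguments. Unset Strict Implicit. Unset Printing Implicit Defensive.
Import Order.TTheory GRing.Theory Num.Theory.

Section Count.
Variables (n : nat) (d : 'I_n -> nat).
Local Notation he := (half_edge d).

Lemma card_tag (v : 'I_n) : #|[pred h : he | tag h == v]| = d v.
Proof.
have E : [pred h : he | tag h == v] =i [set Tagged (fun v => 'I_(d v)) i | i in 'I_(d v)].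
  move=> [w i]; rewrite inE /=; apply/idP/imsetP => [/eqP E|[j _ [E _]]].
    by move: i; rewrite E => i; exists i.
  by rewrite E.
rewrite (eq_card E) card_imset ?card_ord //.
by move=> i j H; exact: eq_from_Tagged H.
Qed.

Lemma sum_tag (F : 'I_n -> nat) : (\sum_(h : he) F (tag h) = \sum_v d v * F v)%N.
Proof.
rewrite (partition_big (fun h : he => tag h) predT) //=.
apply: eq_bigr => v _.
rewrite (eq_bigr (fun _ => F v)); last by move=> h /eqP ->.
by rewrite sum_nat_const card_tag.
Qed.

Lemma card_he : #|{: he}| = elln d.
Proof.
rewrite -sum1_card /elln.
have := sum_tag (fun _ => 1%N); rewrite /= => ->.
by apply: eq_bigr => v _; rewrite muln1.
Qed.


Definition holds (p : {perm he}) (L : seq (he * he)) := all (fun e => p e.1 == e.2) L.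
Definition flat (L : seq (he * he)) := flatten [seq [:: e.1; e.2] | e <- L].
Definition AL (L : seq (he * he)) := [set p in pairings d | holds p L].

Lemma permJt (p : {perm he}) y z u :
  (p ^ tperm y z)%g u = tperm y z (p (tperm y z u)).
Proof. by rewrite -{1}(tpermK y z u) permJ. Qed.

Lemma pairingP (p : {perm he}) :
  reflect (forall h, p (p h) = h /\ p h != h) (p \in pairings d).
Proof.
rewrite inE /is_pairing; apply: (iffP forallP) => H h.
  by have /andP[/eqP -> ->] := H h.
by have [E1 E2] := H h; rewrite E1 eqxx E2.
Qed.

Lemma conj_pairing (p : {perm he}) y z :
  p \in pairings d -> (p ^ tperm y z)%g \in pairings d.
Proof.
move/pairingP => H; apply/pairingP => h; rewrite !permJt tpermK.
have [-> _] := H (tperm y z h); rewrite tpermK; split => //.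
apply/negP => /eqP E.
have : p (tperm y z h) = tperm y z h by rewrite -{2}E tpermK.
by move/eqP; rewrite (negbTE (proj2 (H _))).
Qed.

Lemma size_flat L : size (flat L) = (2 * size L)%N.
Proof. by elim: L => [|e L IH] //=; rewrite IH mulnS. Qed.

Lemma step_count x y L :
  x != y -> x \notin flat L -> y \notin flat L ->
  ((elln d - (2 * size L).+1) * #|AL ((x, y) :: L)| <= #|AL L|)%N.
Proof.
move=> xy xL yL.
set Z := [set z : he | (z != x) && (z \notin flat L)].
have cZ : (elln d - (2 * size L).+1 <= #|Z|)%N.
  have : (#|~: Z| <= (2 * size L).+1)%N.
    rewrite -(size_flat L) -[X in (_ <= X)%N]/(size (x :: flat L)).
    apply: leq_trans (card_size _); apply: subset_leq_card.
    apply/subsetP => h; rewrite !inE negb_and !negbK.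
    by case/orP => ->; rewrite ?orbT.
  have := cardsC Z; rewrite card_he => E. lia.
set S := fun z => [set p in AL L | p x == z].
have cS : forall z, z \in Z -> (#|AL ((x, y) :: L)| <= #|S z|)%N.
  move=> z; rewrite inE => /andP[zx zL].
  rewrite -(card_imset _ (@conjg_inj _ (tperm y z))).
  apply: subset_leq_card; apply/subsetP => q /imsetP[p].
  rewrite !inE /= => /andP[pP /andP[/eqP pxy hL]] ->.
  have cp : is_pairing (p ^ tperm y z)%g.
    by move: (conj_pairing y z (p:=p)); rewrite !inE; apply.
  rewrite cp /= permJt.
  have xz : x != z by rewrite eq_sym.
  have yx : y != x by rewrite eq_sym.
  rewrite (tpermD yx zx) pxy tpermL eqxx andbT.
  apply/allP => e eL; rewrite permJt.
  have e1 : e.1 \in flat L.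
    by apply/flattenP; exists [:: e.1; e.2]; [apply/mapP; exists e|rewrite mem_head].
  have e2 : e.2 \in flat L.
    apply/flattenP; exists [:: e.1; e.2]; [apply/mapP; exists e => //|].
    by rewrite !inE eqxx orbT.
  have ne : forall u, u \in flat L -> (y != u) && (z != u).
    by move=> u uL; apply/andP; split; apply/eqP => E; subst u;
       [rewrite uL in yL | rewrite uL in zL].
  have /andP[y1 z1] := ne _ e1; have /andP[y2 z2] := ne _ e2.
  by rewrite (tpermD y1 z1) (eqP (allP hL e eL)) (tpermD y2 z2).
apply: leq_trans (_ : (\sum_(z in Z) #|S z| <= _)%N).
  apply: leq_trans (leq_mul cZ (leqnn _)) _.
  by rewrite -sum_nat_const; apply: leq_sum => z /cS.
rewrite -sum1_card (partition_big (fun p : {perm he} => p x) predT) //=.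
rewrite [X in (_ <= X)%N](bigID (fun z => z \in Z)) /= -[X in (X <= _)%N]addn0.
apply: leq_add; last exact: leq0n.
apply: leq_sum => z _; rewrite -sum1_card.
by apply: eq_leq; apply: eq_bigl => p; rewrite !inE.
Qed.


Lemma leq_expn2r a b e : (a <= b)%N -> (a ^ e <= b ^ e)%N.
Proof. by move=> ab; elim: e => // e IH; rewrite !expnS leq_mul. Qed.

Lemma count_AL L : uniq (flat L) ->
  (#|AL L| * (elln d - 2 * size L) ^ size L <= #|pairings d|)%N.
Proof.
elim: L => [|[x y] L IH] /=.
  move=> _; rewrite expn0 muln1; apply: subset_leq_card; apply/subsetP => p.
  by rewrite inE => /andP[].
rewrite -/(flat L) inE negb_or => /and3P[/andP[xy xL] yL uL].
have st := step_count xy xL yL.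
apply: leq_trans (IH uL).
rewrite expnS mulnA.
apply: leq_mul; last by apply: leq_expn2r; apply: leq_sub2l; apply: leq_mul.
rewrite mulnC; apply: leq_trans st; apply: leq_mul (leqnn _); apply: leq_sub2l.
by rewrite mulnS addSn ltnS leq_addl.
Qed.


Lemma uniq_flat_map (A B : nat -> he) (s : seq nat) : uniq s ->
  {in s &, injective A} -> {in s &, injective B} ->
  (forall i j, i \in s -> j \in s -> A i != B j) ->
  uniq (flat [seq (A i, B i) | i <- s]).
Proof.
elim: s => [|i s IH] //= /andP[nis us] iA iB AB.
have memf : forall u, u \in flat [seq (A i, B i) | i <- s] ->
    exists2 j, j \in s & (u = A j) \/ (u = B j).
  move=> u /flattenP[l] /mapP[e /mapP[j js ->] ->].
  by rewrite !inE => /orP[]/eqP ->; exists j => //; [left|right].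
have i0 := mem_head i s.
have nij : forall j, j \in s -> i = j -> False.
  by move=> j js E; rewrite E js in nis.
rewrite -/(flat _) inE negb_or (AB i i i0 i0) /=.
apply/and3P; split.
- apply/negP => /memf[j js [E|E]].
    by apply: (nij j js); apply: iA => //; rewrite inE js orbT.
  by move: (AB i j i0); rewrite inE js orbT E eqxx => /(_ isT).
- apply/negP => /memf[j js [E|E]].
    by move: (AB j i); rewrite inE js orbT E eqxx => /(_ isT i0).
  by apply: (nij j js); apply: iB => //; rewrite inE js orbT.
- apply: IH => //.
  + by move=> u v us' vs'; apply: iA; rewrite inE ?us' ?vs' orbT.
  + by move=> u v us' vs'; apply: iB; rewrite inE ?us' ?vs' orbT.
  + by move=> u v us' vs'; apply: AB; rewrite inE ?us' ?vs' orbT.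
Qed.


Definition vpath (p : {perm he}) (c : 'I_n) (m : nat) (pi : nat -> 'I_n) :=
  [/\ pi 0%N = c, forall i, (i < m)%N -> cm_adj p (pi i) (pi i.+1)
    & forall i j, (i <= m)%N -> (j <= m)%N -> pi i = pi j -> i = j].

Section Chain.
Variables (m' : nat) (c : 'I_n) (Q : nat -> pred 'I_n) (R : pred 'I_n).

Definition Wt := (he * {ffun 'I_m' -> he * he} * he)%type.
Definition fget (f : {ffun 'I_m' -> he * he}) (j : nat) dflt :=
  if insub j is Some k then f k else dflt.
Definition Xw (w : Wt) (i : nat) :=
  if i is i'.+1 then (fget w.1.2 i' (w.2, w.2)).2 else w.1.1.
Definition Yw (w : Wt) (i : nat) :=
  if (i < m')%N then (fget w.1.2 i (w.2, w.2)).1 else w.2.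
Definition pairsW (w : Wt) := [seq (Xw w i, Yw w i) | i <- iota 0 m'.+1].
Definition P2 k (e : he * he) :=
  [&& tag e.1 == tag e.2, e.1 != e.2 & Q k (tag e.1)].
Definition valid (w : Wt) :=
  [&& tag w.1.1 == c, [forall k : 'I_m', P2 k.+1 (w.1.2 k)] & R (tag w.2)].
Definition Fw (w : Wt) (p : {perm he}) :=
  [&& valid w, uniq (flat (pairsW w)) & holds p (pairsW w)].

Lemma fgetE f j dflt (lt : (j < m')%N) : fget f j dflt = f (Ordinal lt).
Proof. by rewrite /fget insubT. Qed.

Lemma chain_wit p pi : p \in pairings d -> vpath p c m'.+1 pi ->
  (forall i, (0 < i < m'.+1)%N -> Q i (pi i)) -> R (pi m'.+1) ->
  exists w, Fw w p.
Proof.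
move=> /pairingP pP [p0 adj inj] Qi Rm.
have [h0 _] : exists h : he, true.
  by have /existsP[h _] := adj 0%N isT; exists h.
pose H i := odflt h0 [pick h : he | (tag h == pi i) && (tag (p h) == pi i.+1)].
have HP : forall i, (i < m'.+1)%N -> tag (H i) = pi i /\ tag (p (H i)) = pi i.+1.
  move=> i im; rewrite /H; case: pickP => [h /andP[/eqP -> /eqP ->] //|none].
  by have /existsP[h hh] := adj i im; rewrite none in hh.
have cH : forall i j, (i < m'.+1)%N -> (j < m'.+1)%N -> H i != p (H j).
  move=> i j im jm; apply/eqP => E.
  have := HP i im; have := HP j jm; rewrite E => -[_ t2] [t1 _].
  have ij : i = j.+1 by apply: inj => //; [exact: ltnW| rewrite -t1 t2].
  subst i.
  have : p (H j.+1) = H j by rewrite E (proj1 (pP _)).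
  move=> E2; have := HP j.+1 im; rewrite E2 (proj1 (HP j jm)) => -[_ t3].
  by have := inj j j.+2 (ltnW jm) im t3 => /eqP; rewrite -addn2 -{1}[j]addn0 eqn_add2l.
pose w : Wt := ((H 0%N, [ffun k : 'I_m' => (p (H k), H k.+1)]), p (H m')).
have XE : forall i, (i < m'.+1)%N -> Xw w i = H i.
  by case => [|i] //= im; rewrite fgetE ffunE.
have YE : forall i, (i < m'.+1)%N -> Yw w i = p (H i).
  move=> i; rewrite ltnS leq_eqVlt => /orP[/eqP ->|im].
    by rewrite /Yw ltnn.
  by rewrite /Yw im fgetE ffunE.
have PE : pairsW w = [seq (H i, p (H i)) | i <- iota 0 m'.+1].
  apply/eq_in_map => i; rewrite mem_iota add0n => im.
  by rewrite XE // YE.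
exists w; rewrite /Fw PE; apply/and3P; split.
- apply/and3P; split.
  + by rewrite [w.1.1]/= (proj1 (HP 0%N isT)) p0.
  + apply/forallP => k; rewrite [w.1.2]/= ffunE /P2.
    have km : (k < m'.+1)%N by rewrite ltnW // ltnS.
    have k1m : (k.+1 < m'.+1)%N by rewrite ltnS.
    rewrite [(_, _).1]/= [(_, _).2]/=.
    rewrite (proj2 (HP _ km)) (proj1 (HP _ k1m)) eqxx /=.
    rewrite eq_sym cH //=; apply: Qi; rewrite ltnS; exact: ltn_ord.
  + by rewrite [w.2]/= (proj2 (HP m' (ltnSn _))).
- have iA : {in iota 0 m'.+1 &, injective H}.
    move=> i j; rewrite !mem_iota !add0n => im jm E.
    apply: inj; [exact: ltnW | exact: ltnW |].
    by rewrite -(proj1 (HP i im)) -(proj1 (HP j jm)) E.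
  apply: uniq_flat_map => //; first exact: iota_uniq.
  + by move=> i j ii jj E; apply: iA => //; apply: perm_inj E.
  + by move=> i j; rewrite !mem_iota !add0n; apply: cH.
- by apply/allP => e /mapP[i _ ->] /=.
Qed.

Lemma size_pairsW w : size (pairsW w) = m'.+1.
Proof. by rewrite size_map size_iota. Qed.

Lemma chain_sum :
  ((\sum_(w : Wt) #|[set p in pairings d | Fw w p]|) * (elln d - 2 * m'.+1) ^ m'.+1
    <= #|[pred w : Wt | valid w]| * #|pairings d|)%N.
Proof.
rewrite -[#|[pred w : Wt | valid w]|]sum1_card !big_distrl /= [X in (_ <= X)%N]big_mkcond /=.
apply: leq_sum => w _.
case vw: (valid w); last first.
  rewrite (_ : [set p in pairings d | Fw w p] = set0) ?cards0 //.
  by apply/setP => p; rewrite !inE /Fw vw andbF.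
case uw: (uniq (flat (pairsW w))); last first.
  rewrite (_ : [set p in pairings d | Fw w p] = set0) ?cards0 //.
  by apply/setP => p; rewrite !inE /Fw vw uw andbF.
rewrite (_ : [set p in pairings d | Fw w p] = AL (pairsW w)); last first.
  by apply/setP => p; rewrite !inE /Fw vw uw.
by rewrite inE vw mul1n -(size_pairsW w) count_AL.
Qed.

Lemma chain_card : #|[pred w : Wt | valid w]| =
  (#|[pred h : he | tag h == c]| * \prod_(k < m') #|[pred e | P2 k.+1 e]| *
   #|[pred h : he | R (tag h)]|)%N.
Proof.
pose F := fun k : 'I_m' => [pred e : he * he | P2 k.+1 e].
have -> : #|[pred w : Wt | valid w]| =
    #|[predX [predX [pred h : he | tag h == c] & family F] & [pred h : he | R (tag h)]]|.
  apply: eq_card => -[[h f] h']; rewrite !inE /valid /=; by rewrite andbA.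
rewrite !cardX card_family; congr (_ * _ * _)%N.
by rewrite foldrE big_map big_enum.
Qed.

Lemma card_P2 k : #|[pred e : he * he | P2 k e]| =
  (\sum_(v | Q k v) d v * (d v).-1)%N.
Proof.
rewrite -sum1_card.
rewrite (_ : \sum_(e in [pred e : he * he | P2 k e]) 1 =
   \sum_(u : he) \sum_(w : he | P2 k (u, w)) 1)%N; last first.
  by rewrite pair_big_dep; apply: eq_bigl => -[u w].
rewrite (eq_bigr (fun u : he => if Q k (tag u) then (d (tag u)).-1 else 0%N)); last first.
  move=> u _; rewrite sum1_card /P2 /=.
  case: (Q k (tag u)); last first.
    by apply: eq_card0 => w; rewrite unfold_in /= !andbF.
  rewrite -(card_tag (tag u)) [in RHS](cardD1 u) [in RHS]unfold_in /= eqxx add1n /=.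
  apply: eq_card => w; rewrite !unfold_in /=.
  by rewrite andbT andbC (eq_sym u) (eq_sym (tag u)).
have := sum_tag (fun v => if Q k v then (d v).-1 else 0%N); rewrite /= => ->.
rewrite [RHS]big_mkcond /=.
by apply: eq_bigr => v _; case: (Q k v); rewrite ?muln0.
Qed.

Lemma card_R : #|[pred h : he | R (tag h)]| = (\sum_(v | R v) d v)%N.
Proof.
rewrite -sum1_card big_mkcond /=.
rewrite (eq_bigr (fun h : he => if R (tag h) then 1%N else 0%N)) //.
have := sum_tag (fun v => if R v then 1%N else 0%N); rewrite /= => ->.
rewrite [RHS]big_mkcond /=.
by apply: eq_bigr => v _; case: (R v); rewrite ?muln0 ?muln1.
Qed.

End Chain.


Lemma dist_vpath p a b k : a != b -> cm_dist_le p a b k ->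
  exists m pi, [/\ (0 < m <= k)%N, vpath p a m pi & pi m = b].
Proof.
move=> ab /existsP[kk /existsP[s /andP[pth lst]]].
move: ab; rewrite -(eqP lst).
case/shortenP: pth => s' pth' uq sub ab.
have szs : (size s' <= k)%N.
  apply: leq_trans (uniq_leq_size (proj2 (andP uq)) sub) _.
  by rewrite size_tuple -ltnS ltn_ord.
exists (size s'), (fun i => nth a (a :: s') i); split.
- rewrite szs andbT lt0n size_eq0; apply/eqP => E; move: ab; by rewrite E eqxx.
- split => //.
  + move=> i im; exact: (pathP a pth' i im).
  + move=> i j im jm E; apply/eqP; rewrite -(nth_uniq a _ _ uq) ?E //= ltnS //.
- by have := nth_last a (a :: s'); rewrite /=.
Qed.

Lemma adj_sym p u v : p \in pairings d -> cm_adj p u v -> cm_adj p v u.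
Proof.
move=> /pairingP pP /existsP[h /andP[t1 t2]]; apply/existsP; exists (p h).
by rewrite (proj1 (pP h)) t1 t2.
Qed.

Lemma vpath_rev p c m pi : p \in pairings d -> vpath p c m pi ->
  vpath p (pi m) m (fun i => pi (m - i)%N).
Proof.
move=> pP [p0 adj inj]; split; first by rewrite subn0.
- move=> i im; apply: adj_sym => //.
  have -> : (m - i = (m - i.+1).+1)%N by rewrite subnSK.
  by apply: adj; rewrite ltn_subrL (leq_ltn_trans _ im).
- move=> i j im jm /inj E.
  have := E (leq_subr _ _) (leq_subr _ _); lia.
Qed.

End Count.

Section Main.
Variables (R : realFieldType) (n : nat) (d : 'I_n -> nat) (g : nat -> R).
Local Open Scope ring_scope.
Local Notation he := (half_edge d).
Hypothesis gmono : forall l, g l <= g l.+1.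

Lemma gle i j : (i <= j)%N -> g i <= g j.
Proof.
move=> /subnK <-; elim: (j - i)%N => [|k IH]; first by rewrite add0n.
by rewrite addSn; apply: le_trans IH (gmono _).
Qed.

Definition Qb (i : nat) (v : 'I_n) := (d v)%:R <= g i.
Definition Rb (j : nat) (v : 'I_n) := ~~ ((d v)%:R <= g j).
Definition Qg (m : nat) (i : nat) (v : 'I_n) := (d v)%:R <= Num.min (g i) (g (m - i)%N).

Definition chainE (p : {perm he}) c m (Q : nat -> pred 'I_n) (Rp : pred 'I_n) :=
  exists pi, [/\ vpath p c m pi, (forall i, (0 < i < m)%N -> Q i (pi i)) & Rp (pi m)].

Lemma bad_from p c m pi l : vpath p c m pi -> Qb 0 (pi 0%N) -> (l <= m)%N ->
  Rb l (pi l) -> exists j, (0 < j <= l)%N /\ chainE p c j Qb (Rb j).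
Proof.
move=> [p0 adj inj] q0 lm rl.
have ex : exists j, Rb j (pi j) by exists l.
case: (ex_minnP ex) => j rj minj.
have jl : (j <= l)%N by apply: minj.
have j0 : (0 < j)%N by rewrite lt0n; apply/eqP => E; move: rj q0; rewrite E /Rb /Qb => /negP.
exists j; split; first by rewrite j0 jl.
exists pi; split => //.
- split => //.
  + by move=> i ij; apply: adj; apply: leq_trans ij (leq_trans jl lm).
  + move=> i k ij kj; apply: inj; exact: (leq_trans _ (leq_trans jl lm)).
- move=> i /andP[_ ij]; apply/negPn/negP => ri.
  by have := minj i ri; rewrite leqNgt ij.
Qed.

Lemma classify p a b kbar : p \in pairings d -> a != b ->
  Qb 0 (a) -> Qb 0 b -> cm_dist_le p a b (2 * kbar) ->
  (exists m, (0 < m <= 2 * kbar)%N /\ chainE p a m (Qg m) (pred1 b)) \/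
  (exists j, (0 < j <= kbar)%N /\ chainE p a j Qb (Rb j)) \/
  (exists j, (0 < j <= kbar)%N /\ chainE p b j Qb (Rb j)).
Proof.
move=> pP ab qa qb /(dist_vpath ab)[m [pi [/andP[m0 mk] vp pim]]].
have [p0 _ _] := vp.
case: (boolP [forall l : 'I_m, (0 < l)%N ==> Qg m l (pi l)]) => [/forallP H|].
  left; exists m; split; first by rewrite m0 mk.
  exists pi; split => //; last by rewrite /= pim.
  by move=> i /andP[i0 im]; have := H (Ordinal im); rewrite /= i0.
move=> /forallPn[[l lm]] /=; rewrite negb_imply => /andP[l0].
rewrite /Qg le_min negb_and => H.
case: (leqP (2 * l) m) => hl.
  have rl : Rb l (pi l).
    case/orP: H => // H; apply/negP => D; move/negP: H; apply.
    by apply: le_trans D (gle _); lia.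
  have q0 : Qb 0 (pi 0%N) by rewrite p0.
  have [j [/andP[j0 jl] ch]] := bad_from vp q0 (ltnW lm) rl.
  by right; left; exists j; split => //; rewrite j0; lia.
pose l' := (m - l)%N.
have rl : Rb l' (pi (m - l')%N).
  rewrite (_ : (m - l')%N = l) ; last by rewrite /l'; lia.
  case/orP: H => H; apply/negP => D; move/negP: H; apply => //.
  by apply: le_trans D (gle _); rewrite /l'; lia.
have vr := vpath_rev pP vp.
have q0 : Qb 0 ((fun i => pi (m - i)%N) 0%N) by rewrite subn0 pim.
have [j [/andP[j0 jl] ch]] := bad_from vr q0 (leq_subr _ _) rl.
right; right; exists j; split; first by rewrite j0; rewrite /l' in jl; lia.
by rewrite -pim.
Qed.

End Main.

Lemma card_cond_sum (T : finType) (A : {set T}) (E : pred T) :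
  #|[set x in A | E x]| = (\sum_(x in A) (E x : nat))%N.
Proof.
rewrite -sum1_card big_mkcond [RHS]big_mkcond /=; apply: eq_bigr => x _.
by rewrite inE; case: (x \in A); case: (E x).
Qed.

Lemma card_le_sum (T I : finType) (A : {set T}) (E : pred T) (F : I -> pred T) :
  (forall x, x \in A -> E x -> exists i, F i x) ->
  (#|[set x in A | E x]| <= \sum_i #|[set x in A | F i x]|)%N.
Proof.
move=> H; rewrite card_cond_sum.
rewrite (eq_bigr (fun i => \sum_(x in A) (F i x : nat))%N); last by move=> i _; rewrite card_cond_sum.
rewrite exchange_big /=; apply: leq_sum => x xA.
case Ex: (E x) => //; have [i Fi] := H x xA Ex.
by rewrite (bigD1 i) //= Fi.
Qed.

Section Bound.
Variables (n : nat) (d : 'I_n -> nat).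
Local Notation he := (half_edge d).

Definition GE (m' : nat) (c : 'I_n) (Q : nat -> pred 'I_n) (Rp : pred 'I_n) (p : {perm he}) :=
  [exists w : Wt d m', Fw c Q Rp w p].

Lemma chain_bound m' c Q Rp :
  (#|[set p in pairings d | GE m' c Q Rp p]| * (elln d - 2 * m'.+1) ^ m'.+1 <=
   (d c * \prod_(k < m') (\sum_(v | Q k.+1 v) d v * (d v).-1) * \sum_(v | Rp v) d v)
     * #|pairings d|)%N.
Proof.
apply: leq_trans (_ : (\sum_(w : Wt d m') #|[set p in pairings d | Fw c Q Rp w p]|) * (elln d - 2 * m'.+1) ^ m'.+1 <= _)%N.
  apply: leq_mul => //; apply: card_le_sum => p _ /existsP[w Fwp]; by exists w.
apply: leq_trans (chain_sum d m' c Q Rp) _.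
rewrite chain_card card_tag card_R.
rewrite (eq_bigr (fun k : 'I_m' => \sum_(v | Q k.+1 v) d v * (d v).-1)%N) //.
by move=> k _; rewrite card_P2.
Qed.

End Bound.

Section Final.
Variables (R : realFieldType) (n : nat) (d : 'I_n -> nat) (g : nat -> R).
Local Open Scope ring_scope.
Hypothesis gmono : forall l, g l <= g l.+1.

Lemma chain_GE p c m' Q Rp : p \in pairings d -> chainE p c m'.+1 Q Rp -> GE m' c Q Rp p.
Proof.
move=> pP [pi [vp Qi Rpi]]; have [w Fwp] := chain_wit pP vp Qi Rpi.
by apply/existsP; exists w.
Qed.

Lemma total_count a b kbar : a != b -> Qb d g 0 a -> Qb d g 0 b ->
  (#|[set p in pairings d | cm_dist_le p a b (2 * kbar)]| <=
   \sum_(m < 2 * kbar) #|[set p in pairings d | GE m a (Qg d g m.+1) (pred1 b) p]| +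
   (\sum_(j < kbar) #|[set p in pairings d | GE j a (Qb d g) (Rb d g j.+1) p]| +
    \sum_(j < kbar) #|[set p in pairings d | GE j b (Qb d g) (Rb d g j.+1) p]|))%N.
Proof.
move=> ab qa qb.
pose F (i : ('I_(2 * kbar) + ('I_kbar + 'I_kbar))%type) (p : {perm half_edge d}) :=
  match i with
  | inl m => GE m a (Qg d g m.+1) (pred1 b) p
  | inr (inl j) => GE j a (Qb d g) (Rb d g j.+1) p
  | inr (inr j) => GE j b (Qb d g) (Rb d g j.+1) p
  end.
apply: leq_trans (card_le_sum (F := F) _) _.
  move=> p pP E; case: (classify gmono pP ab qa qb E) => [|[]] [[|m] [/andP[m0 mk] ch]] //.
  - by exists (inl (Ordinal mk)); apply: chain_GE.
  - by exists (inr (inl (Ordinal mk))); apply: chain_GE.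
  - by exists (inr (inr (Ordinal mk))); apply: chain_GE.
by rewrite !big_sumType.
Qed.

End Final.

Local Open Scope ring_scope.

Section Alg.
Variable R : realFieldType.

Lemma pow_term (l k : nat) : (2 * k < l)%N ->
  (1 - (2 * k)%:R / l%:R : R) ^- k = (l%:R) ^+ k / ((l - 2 * k)%:R) ^+ k.
Proof.
move=> kl.
have l0 : (l%:R : R) != 0 by rewrite pnatr_eq0; lia.
have lk0 : ((l - 2 * k)%:R : R) != 0 by rewrite pnatr_eq0; lia.
have -> : (1 - (2 * k)%:R / l%:R : R) = (l - 2 * k)%:R / l%:R.
  by rewrite natrB ?(ltnW kl) // mulrBl divff.
by rewrite expr_div_n invf_div.
Qed.

Lemma prod_div (m : nat) (s : 'I_m -> R) (L : R) :
  \prod_(i < m) (s i / L) = (\prod_(i < m) s i) / L ^+ m.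
Proof. by rewrite prodf_div prodr_const card_ord. Qed.

Lemma nat_div (x D V P : nat) : (0 < D)%N -> (x * D <= V * P)%N ->
  (x%:R : R) <= P%:R * (V%:R / D%:R).
Proof.
move=> D0 H; rewrite mulrA ler_pdivlMr ?ltr0n // -!natrM ler_nat.
by rewrite [(P * V)%N]mulnC.
Qed.

End Alg.

Lemma one_minus_Fstar (R : realFieldType) (n : nat) (d : 'I_n -> nat) (t : R) :
  (0 < elln d)%N ->
  1 - Fstar d t = (\sum_(v | ~~ ((d v)%:R <= t)) d v)%:R / (elln d)%:R.
Proof.
move=> l0; have Lne : ((elln d)%:R : R) != 0 by rewrite pnatr_eq0 -lt0n.
rewrite /Fstar.
have E : ((elln d)%:R : R) = \sum_(v | (d v)%:R <= t) (d v)%:R + \sum_(v | ~~ ((d v)%:R <= t)) (d v)%:R.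
  by rewrite /elln natr_sum (bigID (fun v => (d v)%:R <= t)) /=.
rewrite natr_sum -{1}(divff Lne) -mulrBl; congr (_ / _).
by rewrite {1}E addrC addKr.
Qed.

Lemma nun_eq (R : realFieldType) (n : nat) (d : 'I_n -> nat) (t : R) :
  nun d t = (\sum_(v | (d v)%:R <= t) d v * (d v).-1)%:R / (elln d)%:R.
Proof. by rewrite /nun natr_sum. Qed.

Unset Implicit Arguments.

Theorem proposition3p7 (R : realFieldType) (n : nat) (d : 'I_n -> nat)
    (g : nat -> R) (a b : 'I_n) (kbar : nat) :
  ~~ odd (elln d) ->
  (forall l, g l <= g l.+1) ->
  a != b ->
  (d a)%:R <= g 0%N -> (d b)%:R <= g 0%N ->
  (0 < kbar)%N ->
  (4 * kbar < elln d)%N ->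
  cm_prob R (fun p : {perm half_edge d} => cm_dist_le p a b (2 * kbar)) <=
    ((d a * d b)%:R / (elln d)%:R) *
      \sum_(1 <= k < (2 * kbar).+1)
         ((1 - (2 * k)%:R / (elln d)%:R) ^- k *
          \prod_(1 <= l < k) nun d (Num.min (g l) (g (k - l)%N)))
    + (d a + d b)%:R *
      \sum_(1 <= k < kbar.+1)
         ((1 - (2 * k)%:R / (elln d)%:R) ^- k * (1 - Fstar d (g k)) *
          \prod_(1 <= l < k) nun d (g l)).
Proof.
move=> ev gm ab qa qb k0 kl.
set l := elln d.
have Lne : (l%:R : R) != 0 by rewrite pnatr_eq0; lia.
pose D k := ((l - 2 * k) ^ k)%N.
have Dpos : forall k, (k <= 2 * kbar)%N -> (0 < D k)%N.
  by move=> k kk; rewrite /D expn_gt0; apply/orP; left; lia.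
pose S (Q : nat -> pred 'I_n) (m : nat) := (\prod_(k < m) (\sum_(v | Q k.+1 v) d v * (d v).-1))%N.
pose tG m : R := (d a * S (Qg d g m.+1) m * \sum_(v | pred1 b v) d v)%:R / (D m.+1)%:R.
pose tB c j : R := (d c * S (Qb d g) j * \sum_(v | Rb d g j.+1 v) d v)%:R / (D j.+1)%:R.
pose X := \sum_(m < 2 * kbar) tG m + \sum_(j < kbar) (tB a j + tB b j).
have step1 : (#|[set p in pairings d | cm_dist_le p a b (2 * kbar)]|%:R : R) <= #|pairings d|%:R * X.
  have := total_count gm kbar ab qa qb; rewrite -(ler_nat R) => H.
  apply: le_trans H _.
  rewrite /X !natrD !natr_sum mulrDr !mulr_sumr -[X in _ + X <= _]big_split /=.
  apply: lerD; apply: ler_sum => m _.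
    apply: nat_div; first by apply: Dpos; have := ltn_ord m; lia.
    exact: chain_bound.
  rewrite mulrDr; apply: lerD; (apply: nat_div; first by apply: Dpos; have := ltn_ord m; lia); exact: chain_bound.
have X0 : 0 <= X.
  rewrite /X /tG /tB; apply: addr_ge0; apply: sumr_ge0 => i _;
    rewrite ?addr_ge0 ?divr_ge0 ?ler0n //.
have step2 : cm_prob R (fun p : {perm half_edge d} => cm_dist_le p a b (2 * kbar)) <= X.
  rewrite /cm_prob; have [P0|P0] := eqVneq #|pairings d| 0%N.
    by rewrite P0 invr0 mulr0.
  by rewrite ler_pdivrMr ?ltr0n ?lt0n // mulrC.
apply: (le_trans step2); rewrite le_eqVlt; apply/orP; left; apply/eqP.
rewrite /X; congr (_ + _).
  rewrite big_add1 /= big_mkord mulr_sumr; apply: eq_bigr => m _.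
  rewrite /tG big_add1 /= big_mkord.
  under [in RHS]eq_bigr => i _ do rewrite nun_eq -/l.
  rewrite prod_div pow_term; last by have := ltn_ord m; lia.
  rewrite (big_pred1 b) // !natrM natr_prod /D natrX /Qg.
  have Dne : ((l - 2 * m.+1)%:R : R) != 0 by rewrite pnatr_eq0; have := ltn_ord m; lia.
  set Pr := \prod_(i < m) _; rewrite exprS; clearbody Pr.
  move: (l%:R : R) Lne (((l - 2 * m.+1)%:R : R)) Dne => L Lne0 DD Dne0.
  rewrite exprS.
  have Lm0 : L ^+ m != 0 by rewrite expf_neq0.
  have Dm0 : DD ^+ m != 0 by rewrite expf_neq0.
  move: (L ^+ m) Lm0 (DD ^+ m) Dm0 => Lm Lm0 Dm Dm0.
  by field; rewrite Lm0 Dm0 Dne0 Lne0.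
rewrite big_add1 /= big_mkord mulr_sumr; apply: eq_bigr => j _.
rewrite /tB big_add1 /= big_mkord.
under [in RHS]eq_bigr => i _ do rewrite nun_eq -/l.
rewrite one_minus_Fstar -/l; last by lia.
rewrite prod_div pow_term; last by have := ltn_ord j; lia.
rewrite !natrM natr_prod /D natrX /Qb /Rb natrD.
have Dne : ((l - 2 * j.+1)%:R : R) != 0 by rewrite pnatr_eq0; have := ltn_ord j; lia.
set Pr := \prod_(i < j) _; set T := (\sum_(v | _) _)%:R; clearbody Pr T.
move: (l%:R : R) Lne (((l - 2 * j.+1)%:R : R)) Dne => L Lne0 DD Dne0.
rewrite !exprS.
have Lm0 : L ^+ j != 0 by rewrite expf_neq0.
have Dm0 : DD ^+ j != 0 by rewrite expf_neq0.
move: (L ^+ j) Lm0 (DD ^+ j) Dm0 => Lm Lm0 Dm Dm0.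
by field; rewrite Lm0 Dm0 Dne0 Lne0.
Qed.
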